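(* Let $(X,d,\mu)$ be geometrically doubling and upper doubling, with constants $N,n$ and dominating function $\lambda$ with constant $C_\lambda$, and fix $\varrho>1$. Let $\alpha,\beta\ge 2$ with $\beta>C_\lambda^{\log_2\alpha}$ and $\beta>\alpha^n$. For a ball $B$ let $B'$ denote the smallest ball of the form $\alpha^jB$, $j\in\mathbb{N}=\{0,1,\dots\}$, which is $(\alpha,\beta)$-doubling. Then there is a constant $C$ depending only on these parameters such that: if $f\in L^1_{\mathrm{loc}}(\mu)$, $A\ge0$ and numbers $(f_B)_B$ satisfy the $\mathrm{RBMO}(\mu)$ conditions with constant $A$, then $|f_B-f_{B'}|\le CA$ for every ball $B$. In particular $|f_B-f_{B'}|\le C\|f\|_{\mathrm{RBMO}}$ in this sense.
   Context: Balls $B=B(x,r)=\{y:d(y,x)<r\}$ have specified centre $c_B=x$ and radius $r_B=r>0$; $tB:=B(x,tr)$. Geometrically doubling with constants $N,n$: for every $\delta\in(0,1)$ every ball $B(x,r)$ contains at most $N\delta^{-n}$ centres of pairwise disjoint balls $B(y_j,\delta r)$. Upper doubling: $\mu$ is a Borel measure, finite on bounded sets, and $\lambda:X\times(0,\infty)\to(0,\infty)$ satisfies $r\mapsto\lambda(x,r)$ non-decreasing, $\lambda(x,2r)\le C_\lambda\lambda(x,r)$, $\mu(B(x,r))\le\lambda(x,r)$. A ball $B$ is $(\alpha,\beta)$-doubling if $\mu(\alpha B)\le\beta\mu(B)$ (such $B'$ exists for every ball). The $\mathrm{RBMO}(\mu)$ conditions with constant $A$ (parameter $\varrho$) on $f\in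 L^1_{\mathrm{loc}}(\mu)$ and numbers $f_B$ indexed by balls: $\frac{1}{\mu(\varrho B)}\int_B|f-f_B|\,d\mu\le A$ for all balls $B$, and $|f_B-f_{B_1}|\le A\{1+\int_{2B_1\setminus B}\frac{d\mu(x)}{\lambda(c_B,d(x,c_B))}\}$ whenever $B\subset B_1$. $\|f\|_{\mathrm{RBMO}}$ is the infimum of admissible $A$. *)

(* Defs.v *)
From HB Require Import structures.
From mathcomp Require Import all_boot all_order all_algebra.
From mathcomp Require Import all_classical all_reals all_analysis.
Set Implicit Arguments. Unset Strict Implicit. Unset Printing Implicit Defensive.
Import Order.TTheory GRing.Theory Num.Theory.
Local Open Scope classical_set_scope.
Local Open Scope ring_scope.

Definition oball {R : realType} {X : Type} (dist : X -> X -> R) (x : X) (r : R)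
  : set X := [set y | dist y x < r].

Definition is_metric {R : realType} {X : Type} (dist : X -> X -> R) : Prop :=
  [/\ forall x y, 0 <= dist x y,
      forall x y, dist x y = 0 <-> x = y,
      forall x y, dist x y = dist y x &
      forall x y z, dist x z <= dist x y + dist y z].

Definition geom_doubling {R : realType} {X : Type} (dist : X -> X -> R)
  (N n : R) : Prop :=
  forall (delta : R), 0 < delta < 1 ->
  forall (x : X) (r : R), 0 < r ->
  forall (k : nat) (y : 'I_k -> X),
    (forall i, oball dist x r (y i)) ->
    (forall i j, i != j -> oball dist (y i) (delta * r) `&` oball dist (y j) (delta * r) = set0) ->
    (k%:R <= N * powR delta (- n)).

Definition upper_doubling {R : realType} {d} {X : measurableType d}
  (dist : X -> X -> R) (mu : {measure set X -> \bar R})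
  (lam : X -> R -> R) (Clam : R) : Prop :=
  [/\ forall x r, 0 < r -> 0 < lam x r,
      forall x r s, 0 < r -> r <= s -> lam x r <= lam x s,
      forall x r, 0 < r -> lam x (2 * r) <= Clam * lam x r &
      forall x r, 0 < r -> (mu (oball dist x r) <= (lam x r)%:E)%E].

Definition doubling_ball {R : realType} {d} {X : measurableType d}
  (dist : X -> X -> R) (mu : {measure set X -> \bar R})
  (alpha beta : R) (x : X) (r : R) : Prop :=
  (mu (oball dist x (alpha * r)) <= beta%:E * mu (oball dist x r))%E.

Definition RBMO_cond {R : realType} {d} {X : measurableType d}
  (dist : X -> X -> R) (mu : {measure set X -> \bar R})
  (lam : X -> R -> R) (rho : R) (f : X -> R) (fB : X -> R -> R) (A : R) : Prop :=
  (forall x r, 0 < r ->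
     (\int[mu]_(z in oball dist x r) (`|f z - fB x r|)%:E
        <= A%:E * mu (oball dist x (rho * r)))%E)
  /\
  (forall x r y s, 0 < r -> 0 < s ->
     oball dist x r `<=` oball dist y s ->
     ((`|fB x r - fB y s|)%:E <=
        A%:E * (1 + \int[mu]_(z in oball dist y (2 * s) `\` oball dist x r)
                        ((lam x (dist z x))^-1)%:E))%E).

(* Main.v *)
Require Import Defs.
From HB Require Import structures.
From mathcomp Require Import all_boot all_order all_algebra.
From mathcomp Require Import all_classical all_reals all_analysis.
From mathcomp Require Import measurable_realfun.
From mathcomp Require Import ring lra.
Import Order.TTheory GRing.Theory Num.Theory.
Local Open Scope classical_set_scope.
Local Open Scope ring_scope.

Lemma geom_bound (R : realFieldType) (q : R) : 0 <= q -> q < 1 ->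
  forall j, \sum_(i < j.+1) q ^+ (j - i) <= (1 - q)^-1.
Proof.
move=> q0 q1; have q1' : 0 < 1 - q by rewrite subr_gt0.
elim=> [|j IH].
  rewrite big_ord1 subnn expr0 invf_ge1 //; lra.
rewrite big_ord_recr /= subnn expr0.
have -> : \sum_(i < j.+1) q ^+ (j.+1 - widen_ord (leqnSn j.+1) i) =
          q * \sum_(i < j.+1) q ^+ (j - i).
  rewrite mulr_sumr; apply: eq_bigr => i _ /=.
  have hi : (i <= j)%N by rewrite -ltnS.
  by rewrite (subSn hi) exprS.
apply: (le_trans (lerD (ler_wpM2l q0 IH) (lexx 1))).
have -> : q * (1 - q)^-1 + 1 = (1 - q)^-1 by field; rewrite gt_eqF.
by [].
Qed.

Lemma growth (R : realType) (lam : R -> R) (Clam alpha : R) :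
  (forall r : R, 0 < r -> 0 < lam r) ->
  (forall r s : R, 0 < r -> r <= s -> lam r <= lam s) ->
  (forall r : R, 0 < r -> lam (2 * r) <= Clam * lam r) -> 1 <= Clam -> 2 <= alpha ->
  forall k (s : R), 0 < s ->
  lam (alpha ^+ k * s) <= Clam * (powR Clam (ln alpha / ln 2)) ^+ k * lam s.
Proof.
move=> lpos lmono ldbl C1 a2 k s s0.
have step1 : forall p : nat, lam ((2:R) ^+ p * s) <= Clam ^+ p * lam s.
  elim=> [|p IH]; first by rewrite !expr0 !mul1r.
  have -> : (2:R) ^+ p.+1 * s = 2 * (2 ^+ p * s) by rewrite exprS mulrA.
  apply: (le_trans (ldbl _ _)); first by rewrite mulr_gt0 // exprn_gt0.
  by rewrite exprS -mulrA ler_wpM2l // (le_trans _ C1).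
have a0 : 0 < alpha by apply: lt_le_trans a2.
have ln2 : 0 < ln (2 : R) by apply: ln_gt0; rewrite ltr1n.
have lna : 0 <= ln alpha by apply: ln_ge0; apply: le_trans a2; rewrite ler1n.
set u := ln alpha / ln 2.
have u0 : 0 <= u by rewrite /u divr_ge0 // ltW.
set t := k%:R * u.
have t0 : 0 <= t by rewrite /t mulr_ge0.
have [m [tm mt]] : exists m : nat, t <= m%:R /\ m%:R <= t + 1.
  exists (Num.truncn t).+1; split.
    by have /andP[_ /ltW] := Num.Theory.truncn_itv t0.
  by rewrite -natr1 lerD2r Num.Theory.truncn_le.
have e2 : 0 < (2:R) ^+ m by rewrite exprn_gt0.
have ea : 0 < alpha ^+ k by rewrite exprn_gt0.
have step2 : alpha ^+ k <= 2 ^+ m.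
  rewrite -ler_ln; [|by rewrite posrE|by rewrite posrE].
  rewrite (lnXn k a0) (lnXn m (ltr0n _ 2)) -(mulr_natl (ln alpha)) -(mulr_natl (ln 2)).
  rewrite -ler_pdivrMr // -mulrA.
  exact: tm.
apply: (le_trans (lmono _ _ _ _)); first by rewrite mulr_gt0.
  exact: (ler_wpM2r (ltW s0) step2).
apply: (le_trans (step1 m)); apply: ler_wpM2r; first exact/ltW/lpos.
have C0 : 0 <= Clam by apply: le_trans C1.
rewrite -powR_mulrn // (le_trans (ler_powR C1 mt)) //.
rewrite powRD; last by apply/implyP => _; rewrite gt_eqF // (lt_le_trans ltr01).
rewrite powRr1 // mulrC; apply: ler_wpM2l => //.
by rewrite /t mulrC powRrM powR_mulrn // powR_ge0.
Qed.

Section LeInt.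
Local Open Scope ereal_scope.
Lemma le_int_nm (R : realType) d (T : measurableType d) (mu : {measure set T -> \bar R})
  (D : set T) (f g : T -> \bar R) :
  (forall x, D x -> 0 <= f x) -> (forall x, D x -> f x <= g x) ->
  \int[mu]_(x in D) f x <= \int[mu]_(x in D) g x.
Proof.
move=> f0 fg.
have g0 : forall x, D x -> 0 <= g x by move=> x Dx; exact: le_trans (f0 x Dx) (fg x Dx).
rewrite (ge0_integralE _ f0) (ge0_integralE _ g0).
apply: le_ereal_sup => _ [h /= hf <-]; exists h => //= x.
apply: (le_trans (hf x)); rewrite /patch; case: ifP => // /set_mem Dx; exact: fg.
Qed.
End LeInt.

Lemma e21 (R : realType) : (1:R) <= 2 * 1. Proof. by rewrite mulr1 ler1n. Qed.

Theorem lemma5p1 (R : realType) (N n Clam rho alpha beta : R) :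
  1 < rho -> 2 <= alpha -> 2 <= beta ->
  powR Clam (ln alpha / ln 2) < beta -> powR alpha n < beta ->
  exists C : R,
  forall (d : measure_display) (X : measurableType d) (dist : X -> X -> R)
         (mu : {measure set X -> \bar R}) (lam : X -> R -> R),
    is_metric dist ->
    (forall x r, measurable (oball dist x r)) ->
    (forall x r, (mu (oball dist x r) < +oo)%E) ->
    geom_doubling dist N n ->
    upper_doubling dist mu lam Clam ->
  forall (f : X -> R) (fB : X -> R -> R) (A : R),
    (forall x r, 0 < r -> mu.-integrable (oball dist x r) (EFin \o f)) ->
    0 <= A ->
    RBMO_cond dist mu lam rho f fB A ->
  forall (x : X) (r : R) (j : nat), 0 < r ->
    doubling_ball dist mu alpha beta x (alpha ^+ j * r) ->
    (forall i, (i < j)%N -> ~ doubling_ball dist mu alpha beta x (alpha ^+ i * r)) ->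
    `|fB x r - fB x (alpha ^+ j * r)| <= C * A.
Proof.
move=> rho1 a2 b2 hC ha.
set rho0 := powR Clam (ln alpha / ln 2).
set q := rho0 / beta.
have b0 : 0 < beta by apply: lt_le_trans b2.
have q0 : 0 <= q by rewrite /q divr_ge0 ?powR_ge0 // ltW.
have q1 : q < 1 by rewrite /q ltr_pdivrMr // mul1r.
have q1' : 0 < 1 - q by rewrite subr_gt0.
exists (1 + beta * Clam / (1 - q)).
move=> d X dist mu lam _ mball mfin _ [lpos lmono ldbl mule] f fB A _ A0 [_ RB2]
  x r j r0 hdj hndj.
have C1 : 1 <= Clam.
  have h1 := lpos x 1 ltr01.
  have h2 := le_trans (lmono x 1 (2 * 1) ltr01 (e21 R)) (ldbl x 1 ltr01).
  by rewrite -(ler_pM2r h1) mul1r.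
have a0 : 0 < alpha by apply: lt_le_trans a2.
have ak k : 0 < alpha ^+ k * r by rewrite mulr_gt0 // exprn_gt0.
pose M k := fine (mu (oball dist x (alpha ^+ k * r))).
have muE k : mu (oball dist x (alpha ^+ k * r)) = (M k)%:E.
  by rewrite fineK // ge0_fin_numE.
have M0 k : 0 <= M k by apply: fine_ge0.
have Mlam k : M k <= lam x (alpha ^+ k * r).
  by rewrite -lee_fin -muE; apply: mule.
have nd i : (i < j)%N -> beta * M i < M i.+1.
  move=> /hndj; rewrite /doubling_ball mulrA -exprS !muE -EFinM lee_fin.
  by move=> /negP; rewrite -ltNge.
have dj : M j.+1 <= beta * M j.
  by move: hdj; rewrite /doubling_ball mulrA -exprS !muE -EFinM lee_fin.
have chain t i : (i + t <= j)%N -> beta ^+ t * M i <= M (i + t)%N.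
  elim: t => [|t IH] h; first by rewrite expr0 mul1r addn0.
  have h' : (i + t < j)%N by rewrite addnS in h.
  rewrite exprS -mulrA addnS.
  apply: le_trans (ltW (nd _ h')).
  by rewrite ler_pM2l // IH // ltnW.
have key i : (i <= j)%N -> beta ^+ (j - i) * M i.+1 <= beta * M j.
  rewrite leq_eqVlt => /orP[/eqP -> | hij]; first by rewrite subnn expr0 mul1r.
  rewrite -(subnSK hij) exprS -mulrA ler_pM2l //.
  have := chain (j - i.+1)%N i.+1; rewrite subnKC //; apply; exact: leqnn.
have growthx := @growth R (lam x) Clam alpha (lpos x) (lmono x) (ldbl x) C1 a2.
have term i : (i <= j)%N ->
    M i.+1 / lam x (alpha ^+ i * r) <= beta * Clam * q ^+ (j - i).
  move=> hij.
  have li := lpos x _ (ak i).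
  rewrite ler_pdivrMr //.
  have h1 : beta ^+ (j - i) * M i.+1 <=
            beta * (Clam * rho0 ^+ (j - i) * lam x (alpha ^+ i * r)).
    apply: (le_trans (key i hij)); rewrite ler_pM2l //.
    apply: (le_trans (Mlam j)).
    have -> : alpha ^+ j * r = alpha ^+ (j - i) * (alpha ^+ i * r).
      by rewrite mulrA -exprD subnK.
    exact: growthx.
  have bn : 0 < beta ^+ (j - i) by rewrite exprn_gt0.
  rewrite -(ler_pM2l bn); apply: (le_trans h1).
  rewrite /q expr_div_n le_eqVlt; apply/orP; left; apply/eqP.
  field; rewrite gt_eqF //.
have sumb : \sum_(i < j.+1) M i.+1 / lam x (alpha ^+ i * r) <=
            beta * Clam / (1 - q).
  apply: (@le_trans _ _ (\sum_(i < j.+1) beta * Clam * q ^+ (j - i))).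
    by apply: ler_sum => i _; apply: term; rewrite -ltnS.
  rewrite -mulr_sumr; apply: ler_wpM2l.
    by rewrite mulr_ge0 // ?(ltW b0) // (le_trans ler01 C1).
  exact: geom_bound.
have a1 : 1 <= alpha by apply: le_trans a2; rewrite ler1n.
have sub : oball dist x r `<=` oball dist x (alpha ^+ j * r).
  move=> z; rewrite /oball /= => hz; apply: (lt_le_trans hz).
  by rewrite ler_peMl ?(ltW r0) // exprn_ege1.
have hR := RB2 x r x (alpha ^+ j * r) r0 (ak j) sub.
have mD : measurable (oball dist x (2 * (alpha ^+ j * r)) `\` oball dist x r).
  by apply: measurableD.
pose h z := (\sum_(i < j.+1) ((lam x (alpha ^+ i * r))^-1)%:E *
                (\1_(oball dist x (alpha ^+ i.+1 * r)) z)%:E)%E.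
have hr z : (oball dist x (2 * (alpha ^+ j * r)) `\` oball dist x r) z -> r <= dist z x.
  by move=> [_ hz]; rewrite leNgt; apply/negP.
have ib1 : (\int[mu]_(z in oball dist x (2 * (alpha ^+ j * r)) `\` oball dist x r)
              ((lam x (dist z x))^-1)%:E <=
           \int[mu]_(z in oball dist x (2 * (alpha ^+ j * r)) `\` oball dist x r) h z)%E.
  apply: le_int_nm.
    move=> z /hr hz; rewrite lee_fin invr_ge0; apply: ltW; apply: lpos.
    exact: lt_le_trans hz.
  move=> z Dz; have hz := hr z Dz.
  have [hz1 _] := Dz.
  have Pj : dist z x < alpha ^+ j.+1 * r.
    apply: (lt_le_trans hz1); rewrite exprS -mulrA ler_pM2r //.
  have P : exists i, dist z x < alpha ^+ i.+1 * r by exists j.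
  case: (ex_minnP P) => i hi hmin.
  have hlo : alpha ^+ i * r <= dist z x.
    case: i hi hmin => [|i] hi hmin; first by rewrite expr0 mul1r.
    by rewrite leNgt; apply/negP => /hmin; rewrite ltnn.
  have ij : (i < j.+1)%N by rewrite ltnS; apply: hmin.
  rewrite /h (bigD1 (Ordinal ij)) //=.
  apply: le_trans (leeDl _ _); last first.
    apply: sume_ge0 => k _; apply: mule_ge0; rewrite lee_fin.
      by rewrite invr_ge0; apply: ltW; apply: lpos.
    by rewrite indicE ler0n.
  have -> : \1_(oball dist x (alpha ^+ i.+1 * r)) z = 1 :> R.
    by rewrite indicE mem_set.
  rewrite mule1 lee_fin lef_pV2 ?posrE; first exact: lmono.
    by apply: lpos; apply: lt_le_trans hz.
  exact: lpos.
have ib2 : (\int[mu]_(z in oball dist x (2 * (alpha ^+ j * r)) `\` oball dist x r) h z <=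
           (\sum_(i < j.+1) M i.+1 / lam x (alpha ^+ i * r))%:E)%E.
  rewrite /h ge0_integral_sum //; last 2 first.
  - move=> i; apply: measurable_funeM; exact/measurable_EFinP/measurable_indic.
  - move=> i z _; apply: mule_ge0; rewrite lee_fin.
      by rewrite invr_ge0; apply: ltW; apply: lpos.
    by rewrite indicE ler0n.
  rewrite -sumEFin; apply: lee_sum => i _.
  rewrite ge0_integralZl_EFin //;
    try (by move=> z _; rewrite lee_fin indicE ler0n);
    try (exact/measurable_EFinP/measurable_indic);
    try (by rewrite invr_ge0; apply: ltW; apply: lpos).
  rewrite integral_indic //.
  apply: (@le_trans _ _ (((lam x (alpha ^+ i * r))^-1)%:E *
                         mu (oball dist x (alpha ^+ i.+1 * r)))%E).
    have hc : (0 <= ((lam x (alpha ^+ i * r))^-1)%:E)%E.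
      by rewrite lee_fin invr_ge0; apply: ltW; apply: lpos.
    exact: (lee_wpmul2l hc (measureIl mu (mball _ _) mD)).
  by rewrite muE -EFinM lee_fin mulrC.
have : (`|fB x r - fB x (alpha ^+ j * r)|%:E <=
        ((1 + beta * Clam / (1 - q)) * A)%:E)%E.
  apply: (le_trans hR); rewrite (mulrC (1 + _) A) EFinM.
  have hA : (0 <= A%:E)%E by rewrite lee_fin.
  apply: (lee_wpmul2l hA).
  rewrite EFinD; apply: leeD => //.
  apply: (le_trans ib1); apply: (le_trans ib2).
  by rewrite lee_fin.
by rewrite lee_fin.
Qed.
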